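(* Let $\varepsilon>0$ and let $\widetilde M_f,\widetilde M_g$ be as in the context. Let $\phi: L_f\to\widetilde M_g$ assign to each leaf $u\in L_f$ a node $\phi(u)$ of $\widetilde M_g$ with $\tilde g(\phi(u))=\tilde f(u)+\varepsilon$. For two distinct leaves $u_i,u_j\in L_f$, let $\phi_i: P_i\to P_i'$ and $\phi_j: P_j\to P_j'$ be the path extensions of $u_i\mapsto\phi(u_i)$ and $u_j\mapsto\phi(u_j)$, and let $v=\mathrm{LCA}(u_i,u_j)$ be the least common ancestor of $u_i$ and $u_j$ in $\widetilde M_f$. Then the map $\phi_i\cup\phi_j: P_i\cup P_j\to P_i'\cup P_j'$, given by $\phi_i$ on $P_i$ and $\phi_j$ on $P_j$, is well-defined if and only if $\phi_i(v)=\phi_j(v)$. Furthermore, under this condition $\phi_i\cup\phi_j$ is continuous.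
   Context: A finite merge tree is a finite rooted tree regarded as a topological space, with a continuous height function strictly increasing along each edge toward the root. Let $M_f$ (height $\tilde f$, root $r_f$) and $M_g$ (height $\tilde g$, root $r_g$) be finite merge trees with $\tilde g(r_g)=\tilde f(r_f)+\varepsilon$. Let $H=\{\tilde f(u): u \text{ a node of } M_f\}\cup\{\tilde g(w)-\varepsilon: w\text{ a node of } M_g\}$. The augmented tree $\widetilde M_f$ is obtained from $M_f$ by inserting a degree-two node at every point $x$ with $\tilde f(x)\in H$ that is not already a node; $\widetilde M_g$ is obtained from $M_g$ by inserting a degree-two node at every point $y$ with $\tilde g(y)\in H+\varepsilon$ not already a node. $L_f$ is the set of leaf nodes of $\widetilde M_f$. For a leaf $u_i$, $P_i$ is the path from $u_i$ to the root of $\widetilde M_f$ and $P_i'$ the path from $\phi(u_i)$ to the root of $\widetilde M_g$; the path extension $\phi_i: P_i\to P_i'$ maps each $x\in P_i$ to the unique point of $P_i'$ whose $\tilde g$-value is $\tilde f(x)+\varepsilon$. A point $a$ is an ancestor of $b$ if $a$ lies on the path from $b$ to the root; $\mathrm{LCA}(u_i,u_j)$ is the common ancestor of $u_i,u_j$ of smallest height. *)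

(* Defs.v *)
From HB Require Import structures.
From mathcomp Require Import all_boot all_order all_algebra.
From mathcomp Require Import reals.
From Stdlib Require Import ClassicalEpsilon.
Set Implicit Arguments. Unset Strict Implicit. Unset Printing Implicit Defensive.
Import Order.TTheory GRing.Theory Num.Theory.
Local Open Scope ring_scope.

Record mtree (R : realType) := MTree {
  mt_V : finType;
  mt_root : mt_V;
  mt_par : mt_V -> mt_V;
  mt_ht : mt_V -> R;
  mt_par_root : mt_par mt_root = mt_root;
  mt_reach : forall v, exists n, iter n mt_par v = mt_root;
  mt_incr : forall v, v != mt_root -> mt_ht v < mt_ht (mt_par v) }.
Arguments mt_V {R} m.
Arguments mt_root {R} m.
Arguments mt_par {R} m _.
Arguments mt_ht {R} m _.

Section Points.
Variable R : realType.
Variable T : mtree R.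

(* A point of the topological tree: either the root, or a point on the
   half-open edge [v, parent v), encoded by the node v below it and its height. *)
Definition valid_pt (v : mt_V T) (h : R) : bool :=
  if v == mt_root T then h == mt_ht T v
  else (mt_ht T v <= h) && (h < mt_ht T (mt_par T v)).

Record point := Pt { pt_v : mt_V T; pt_h : R; pt_ok : valid_pt pt_v pt_h }.

Lemma root_pt_ok : valid_pt (mt_root T) (mt_ht T (mt_root T)).
Proof. by rewrite /valid_pt eqxx. Qed.

Definition root_pt : point := Pt root_pt_ok.

Definition anc (a b : point) : Prop :=
  (exists n, pt_v a = iter n (mt_par T) (pt_v b)) /\ pt_h b <= pt_h a.

Definition is_node (x : point) : Prop := pt_h x = mt_ht T (pt_v x).

Definition is_lca (v a b : point) : Prop :=
  anc v a /\ anc v b /\ forall w, anc w a -> anc w b -> pt_h v <= pt_h w.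

(* Open ball of the path metric (edge length = height difference):
   d(x,y) < d  iff some common ancestor a has (h a - h x) + (h a - h y) < d. *)
Definition near (x y : point) (d : R) : Prop :=
  exists a, anc a x /\ anc a y /\ (pt_h a - pt_h x) + (pt_h a - pt_h y) < d.

End Points.

Arguments root_pt {R} T.

Section Merge.
Variable R : realType.
Variables (Tf Tg : mtree R) (eps : R).

Definition Hset (r : R) : Prop :=
  (exists v : mt_V Tf, r = mt_ht Tf v) \/ (exists w : mt_V Tg, r = mt_ht Tg w - eps).

Definition aug_node_f (x : point Tf) : Prop := is_node x \/ Hset (pt_h x).
Definition aug_node_g (y : point Tg) : Prop := is_node y \/ Hset (pt_h y - eps).

Definition aug_leaf_f (x : point Tf) : Prop :=
  aug_node_f x /\ forall y, anc x y -> y = x.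

(* Path extension of u |-> u' : x on the path from u maps to the (unique)
   point of the path from u' to the root of height h(x) + eps. *)
Definition pext (u' : point Tg) (x : point Tf) : point Tg :=
  epsilon (inhabits (root_pt Tg))
    (fun y => anc y u' /\ pt_h y = pt_h x + eps).

End Merge.
Arguments Hset {R} Tf Tg eps r.
Arguments aug_node_f {R} Tf Tg eps x.
Arguments aug_node_g {R} Tf Tg eps y.
Arguments aug_leaf_f {R} Tf Tg eps x.
Arguments pext {R Tf Tg} eps u' x.

Definition punion (A B : Type) (P : A -> Prop) (f g : A -> B) (x : A) : B :=
  if excluded_middle_informative (P x) then f x else g x.

Definition cont_on (R : realType) (Tf Tg : mtree R)
    (S : point Tf -> Prop) (F : point Tf -> point Tg) : Prop :=
  forall x, S x -> forall e : R, 0 < e -> exists d : R, 0 < d /\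
    forall y, S y -> near x y d -> near (F x) (F y) e.

(* Main.v *)
Require Import Defs.
From HB Require Import structures.
From mathcomp Require Import all_boot all_order all_algebra.
From mathcomp Require Import reals.
From mathcomp Require Import ring lra.
From Stdlib Require Import ClassicalEpsilon.
Import Order.TTheory GRing.Theory Num.Theory.
Local Open Scope ring_scope.
Set Implicit Arguments. Unset Strict Implicit.

Section Tree.
Variables (R : realType) (T : mtree R).
Notation par := (mt_par T).
Notation ht := (mt_ht T).
Notation rt := (mt_root T).

Lemma ht_par w : ht w <= ht (par w).
Proof.
case: (eqVneq w rt) => [->|h]; first by rewrite mt_par_root.
exact/ltW/mt_incr.
Qed.

Lemma ht_iter k w : ht w <= ht (iter k par w).
Proof.
elim: k => [|k IH] //=; exact: le_trans IH (ht_par _).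
Qed.

Lemma iter_root k : iter k par rt = rt.
Proof. by elim: k => //= k ->; rewrite mt_par_root. Qed.

Lemma ht_le_root w : ht w <= ht rt.
Proof. case: (mt_reach w) => n <-; exact: ht_iter. Qed.

Lemma pt_valid (x : point T) :
  if pt_v x == rt then pt_h x = ht (pt_v x)
  else (ht (pt_v x) <= pt_h x) && (pt_h x < ht (par (pt_v x))).
Proof. case: x => v h /=; rewrite /valid_pt; case: (v == rt) => //; by move/eqP. Qed.

Lemma pt_h_ge (x : point T) : ht (pt_v x) <= pt_h x.
Proof. have := pt_valid x; case: (_ == _) => [->//|/andP[]//]. Qed.

Lemma pt_h_le_root (x : point T) : pt_h x <= ht rt.
Proof.
have := pt_valid x; case: eqP => [-> -> //|_ /andP[_ h]].
exact/ltW/(lt_le_trans h)/ht_le_root.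
Qed.

Lemma keyK (a b : point T) k : pt_v b = iter k par (pt_v a) ->
  pt_v a <> pt_v b -> pt_h a < pt_h b.
Proof.
move=> hb hne; case: k hb => [|k] hb; first by rewrite hb in hne.
have nr : pt_v a != rt.
  by apply/eqP => e; apply: hne; rewrite hb e iter_root.
have := pt_valid a; rewrite (negbTE nr) => /andP[_ h1].
apply: (lt_le_trans h1); apply: (le_trans _ (pt_h_ge b)).
by rewrite hb iterSr; apply: ht_iter.
Qed.

Lemma pt_eq (a b : point T) : pt_v a = pt_v b -> pt_h a = pt_h b -> a = b.
Proof.
case: a => va ha oka; case: b => vb hb okb /= e1 e2; subst.
by rewrite (bool_irrelevance oka okb).
Qed.

Lemma anc_trans (a b c : point T) : anc a b -> anc b c -> anc a c.
Proof.
move=> [[n hn] h1] [[m hm] h2]; split; last exact: le_trans h2 h1.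
by exists (n + m)%N; rewrite iterD -hm.
Qed.

Lemma anc_refl (a : point T) : anc a a.
Proof. by split=> //; exists 0%N. Qed.

Lemma anc_comp (a b c : point T) : anc a c -> anc b c -> pt_h a <= pt_h b -> anc b a.
Proof.
move=> [[n hn] _] [[m hm] _] hab; split=> //.
case: (leqP n m) => hnm.
  by exists (m - n)%N; rewrite hm hn -iterD subnK.
case: (eqVneq (pt_v a) (pt_v b)) => [e|ne]; first by exists 0%N.
have: pt_v a = iter (n - m) par (pt_v b) by rewrite hn hm -iterD subnK // ltnW.
move/keyK => /(_ (nesym (elimN eqP ne))) h; exfalso; move: h; rewrite ltNge hab //.
Qed.

Lemma anc_uniq (a b c : point T) : anc a c -> anc b c -> pt_h a = pt_h b -> a = b.
Proof.
move=> ha hb e; have [[k hk] _] := anc_comp ha hb (ltac:(by rewrite e)).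
apply: pt_eq => //; case: (eqVneq (pt_v a) (pt_v b)) => [//|ne].
have := keyK hk (elimN eqP ne); by rewrite e ltxx.
Qed.

Lemma ivt (c : point T) t : pt_h c <= t -> t <= ht rt -> exists y, anc y c /\ pt_h y = t.
Proof.
have [n hn] := mt_reach (pt_v c).
elim: n c hn => [|n IH] c /= hn hct htr.
  have := pt_valid c; rewrite hn eqxx => e.
  exists c; split; [exact: anc_refl|]; apply/le_anti; by rewrite hct e htr.
case: (eqVneq (pt_v c) rt) => [e|ne].
  have := pt_valid c; rewrite e eqxx => e2.
  exists c; split; [exact: anc_refl|]; apply/le_anti; by rewrite hct e2 htr.
have := pt_valid c; rewrite (negbTE ne) => /andP[h1 h2].
case: (ltP t (ht (par (pt_v c)))) => ht2.
  have ok : valid_pt (pt_v c) t by rewrite /valid_pt (negbTE ne) ht2 (le_trans h1 hct).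
  exists (Pt ok); split=> //; split=> //=; by exists 0%N.
have ok : valid_pt (par (pt_v c)) (ht (par (pt_v c))).
  rewrite /valid_pt; case: eqP => // /eqP nr; rewrite lexx /=; exact: mt_incr.
have [y [hy1 hy2]] := IH (Pt ok) (ltac:(by rewrite /= -iterSr)) ht2 htr.
exists y; split=> //; apply: anc_trans hy1 _; split; last exact: ltW.
by exists 1%N.
Qed.

End Tree.

Lemma pext_spec (R : realType) (Tf Tg : mtree R) (eps : R)
  (hroot : mt_ht Tg (mt_root Tg) = mt_ht Tf (mt_root Tf) + eps)
  (u : point Tf) (u' : point Tg) (hu : pt_h u' = pt_h u + eps) (x : point Tf) :
  anc x u -> anc (pext eps u' x) u' /\ pt_h (pext eps u' x) = pt_h x + eps.
Proof.
move=> [_ hx].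
have ex : exists y, anc y u' /\ pt_h y = pt_h x + eps.
  apply: ivt; first by rewrite hu lerD2r.
  by rewrite hroot lerD2r pt_h_le_root.
exact: (epsilon_spec _ _ ex).
Qed.

Theorem lemma4p5 (R : realType) (Tf Tg : mtree R) (eps : R)
  (heps : 0 < eps)
  (hroot : mt_ht Tg (mt_root Tg) = mt_ht Tf (mt_root Tf) + eps)
  (phi : point Tf -> point Tg)
  (hphi : forall u, aug_leaf_f Tf Tg eps u ->
            aug_node_g Tf Tg eps (phi u) /\ pt_h (phi u) = pt_h u + eps)
  (ui uj : point Tf)
  (hi : aug_leaf_f Tf Tg eps ui) (hj : aug_leaf_f Tf Tg eps uj) (hij : ui <> uj)
  (v : point Tf) (hv : is_lca v ui uj) :
  ((forall x, anc x ui -> anc x uj -> pext eps (phi ui) x = pext eps (phi uj) x)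
     <-> pext eps (phi ui) v = pext eps (phi uj) v)
  /\ (pext eps (phi ui) v = pext eps (phi uj) v ->
      cont_on (fun x => anc x ui \/ anc x uj)
        (punion (fun x => anc x ui) (pext eps (phi ui)) (pext eps (phi uj)))).
Proof.
have hU : forall u, u = ui \/ u = uj -> pt_h (phi u) = pt_h u + eps.
  by move=> u [->|->]; [exact: (hphi _ hi).2 | exact: (hphi _ hj).2].
have sp : forall u, u = ui \/ u = uj -> forall x, anc x u ->
    anc (pext eps (phi u) x) (phi u) /\ pt_h (pext eps (phi u) x) = pt_h x + eps.
  by move=> u hu x; apply: (pext_spec hroot (hU u hu)).
have agree : pext eps (phi ui) v = pext eps (phi uj) v ->
    forall x, anc x ui -> anc x uj -> pext eps (phi ui) x = pext eps (phi uj) x.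
  move=> H x hxi hxj.
  have [Yi1 Yi2] := sp ui (or_introl erefl) x hxi.
  have [Yj1 Yj2] := sp uj (or_intror erefl) x hxj.
  have [W1 W2] := sp ui (or_introl erefl) v hv.1.
  have [W1' _] := sp uj (or_intror erefl) v hv.2.1.
  rewrite -H in W1'.
  have hvx := hv.2.2 x hxi hxj.
  have YW : anc (pext eps (phi ui) x) (pext eps (phi ui) v).
    by apply: anc_comp W1 Yi1 _; rewrite W2 Yi2 lerD2r.
  apply: anc_uniq (anc_trans YW W1') Yj1 _; by rewrite Yi2 Yj2.
split.
  split; last exact: agree.
  by move=> H; apply: H; [exact: hv.1 | exact: hv.2.1].
move=> H.
have agree2 : forall a u u', (u = ui \/ u = uj) -> (u' = ui \/ u' = uj) ->
    anc a u -> anc a u' -> pext eps (phi u) a = pext eps (phi u') a.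
  move=> a u u' [->|->] [->|->] h1 h2 //; first exact: agree.
  by apply/esym/agree.
have Fval : forall x, anc x ui \/ anc x uj -> exists u, (u = ui \/ u = uj) /\ anc x u /\
    punion (fun x => anc x ui) (pext eps (phi ui)) (pext eps (phi uj)) x
    = pext eps (phi u) x.
  move=> x Sx; rewrite /punion; case: excluded_middle_informative => [h|h].
    by exists ui; split; [left|].
  by exists uj; split; [right|split=> //; case: Sx].
move=> x Sx e e0; exists e; split=> // y Sy [a [hax [hay hsum]]].
have [u [hu [hxu ->]]] := Fval x Sx.
have [u' [hu' [hyu' ->]]] := Fval y Sy.
have hau := anc_trans hax hxu; have hau' := anc_trans hay hyu'.
have [b1 b2] := sp u hu a hau.
have [x1 x2] := sp u hu x hxu.
have [b1' _] := sp u' hu' a hau'.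
rewrite -(agree2 a u u' hu hu' hau hau') in b1'.
have [y1 y2] := sp u' hu' y hyu'.
exists (pext eps (phi u) a); split.
  by apply: anc_comp x1 b1 _; rewrite x2 b2 lerD2r; case: hax.
split.
  by apply: anc_comp y1 b1' _; rewrite y2 b2 lerD2r; case: hay.
rewrite b2 x2 y2; move: hsum; move: (pt_h a) (pt_h x) (pt_h y) => A X Y.
have -> : A + eps - (X + eps) + (A + eps - (Y + eps)) = A - X + (A - Y) by ring.
by [].


Qed.
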